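(* Let $\mathbb{K}$ be a field of characteristic zero, let $u,v\in\mathbb{K}$ with $uv\neq0$, and let $f_j=X^{\alpha_j}(uX+v)^{\beta_j}$ for $1\le j\le \ell$, where $\alpha_j,\beta_j$ are integers with $\alpha_j\ge \ell$ and $\beta_j\ge\ell$ for all $j$. If $f_1,\dots,f_\ell$ are linearly independent over $\mathbb{K}$, then \[\operatorname{val}\bigl(W(f_1,\dots,f_\ell)\bigr)\le\sum_{j=1}^\ell\alpha_j.\]
   Context: The Wronskian $W(f_1,\dots,f_\ell)$ is the determinant of the $\ell\times\ell$ matrix whose entry in row $i$ ($0\le i\le\ell-1$) and column $j$ is $f_j^{(i)}$. For a nonzero polynomial $P$, $\operatorname{val}(P)$ is the largest integer $v$ with $X^v\mid P$. *)

(* Defs.v *)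
From HB Require Import structures.
From mathcomp Require Import all_boot all_order all_algebra.
Set Implicit Arguments. Unset Strict Implicit. Unset Printing Implicit Defensive.
Import Order.TTheory GRing.Theory Num.Theory.
Local Open Scope ring_scope.

Definition wronskian (K : fieldType) (l : nat) (f : 'I_l -> {poly K}) : {poly K} :=
  \det (\matrix_(i < l, j < l) (f j)^`(i)).

(* val P = largest v with X^v | P  (meaningful for P != 0; then X^v | P forces v < size P) *)
Definition pval (K : fieldType) (P : {poly K}) : nat :=
  (\max_(v < size P | dvdp 'X^v P) v)%N.

Definition lin_indep (K : fieldType) (l : nat) (f : 'I_l -> {poly K}) : Prop :=
  forall c : 'I_l -> K, \sum_(j < l) c j *: f j = 0 -> forall j, c j = 0.

(* Main.v *)
Require Import Defs.
From HB Require Import structures.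
From mathcomp Require Import all_boot all_order all_algebra zify ring.
Set Implicit Arguments. Unset Strict Implicit. Unset Printing Implicit Defensive.
Import GRing.Theory.
Local Open Scope ring_scope.

Section Val.
Variable K : fieldType.
Implicit Types p q : {poly K}.

Definition vx p : nat := find (fun c => c != 0) p.

Lemma vx_coef p : p != 0 -> p`_(vx p) != 0.
Proof.
move=> p0; have hs : has (fun c => c != 0) p.
  apply/hasP; exists (lead_coef p); last by rewrite lead_coef_eq0.
  by rewrite lead_coefE mem_nth // prednK // lt0n size_poly_eq0.
exact: (nth_find 0 hs).
Qed.

Lemma vx_lt p k : (k < vx p)%N -> p`_k = 0.
Proof. by move=> h; have := before_find 0 h; move/negbFE/eqP. Qed.

Lemma vx_size p : p != 0 -> (vx p < size p)%N.
Proof.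
move=> p0; rewrite ltnNge; apply/negP => h.
by move: (vx_coef p0); rewrite nth_default // eqxx.
Qed.

Lemma vx_dec p : p = 'X^(vx p) * drop_poly (vx p) p.
Proof.
have ht : take_poly (vx p) p = 0.
  apply/polyP => i; rewrite coef_take_poly coef0.
  by case: ifP => // /vx_lt.
by rewrite -[p in LHS](poly_take_drop (vx p)) ht add0r mulrC.
Qed.

Lemma vx_drop0 p : (drop_poly (vx p) p)`_0 = p`_(vx p).
Proof. by rewrite coef_drop_poly add0n. Qed.

Lemma low0_dec p e : (forall k, (k < e)%N -> p`_k = 0) -> p = 'X^e * drop_poly e p.
Proof.
move=> h; have ht : take_poly e p = 0.
  apply/polyP => i; rewrite coef_take_poly coef0.
  by case: ifP => // /h.
by rewrite -[p in LHS](poly_take_drop e) ht add0r mulrC.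
Qed.

End Val.
Section Gen.
Variable K : fieldType.

Lemma ker_exists l n (B : 'M[K]_(l, n)) : (n < l)%N ->
  exists2 c : 'rV_l, c != 0 & c *m B = 0.
Proof.
move=> hnl; have : ~~ row_free B.
  apply/negP => /eqP hr; move: (rank_leq_col B); rewrite hr.
  by rewrite leqNgt hnl.
by rewrite -kermx_eq0 => /rowV0Pn [v /sub_kermxP hv v0]; exists v.
Qed.

Lemma size_prod_le (I : Type) (r : seq I) (F : I -> {poly K}) (d : I -> nat) :
  (forall i, (size (F i) <= (d i).+1)%N) ->
  (size (\prod_(i <- r) F i)%R <= (\sum_(i <- r) d i).+1)%N.
Proof.
move=> h; elim: r => [|x r IH]; first by rewrite !big_nil size_poly1.
rewrite !big_cons; apply: leq_trans (size_mul_leq _ _) _.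
have := h x; lia.
Qed.

Lemma size_det_le n (A : 'M[{poly K}]_n) (d : 'I_n -> nat) :
  (forall i j, (size (A i j) <= (d i).+1)%N) ->
  (size (\det A) <= (\sum_i d i).+1)%N.
Proof.
move=> h; rewrite /determinant; apply: leq_trans (size_sum _ _ _) _.
apply/bigmax_leqP => s _; rewrite size_Msign.
exact: size_prod_le.
Qed.

Hypothesis hchar : [pchar K] =i pred0.

Lemma natr_eqK (m n : nat) : ((m%:R : K) == n%:R) = (m == n).
Proof.
have h := (pcharf0P K).1 hchar.
wlog le : m n / (m <= n)%N.
  move=> H; case: (leqP m n) => [|/ltnW] hmn; first exact: H.
  by rewrite eq_sym H // eq_sym.
rewrite -(subnKC le) natrD -subr_eq0 opprD addrA subrr add0r oppr_eq0 h.
lia.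
Qed.

Definition ff (i : nat) : {poly K} := \prod_(t < i) ('X - (t%:R)%:P).

Lemma ff_horner i (e : nat) : (ff i).[e%:R] = (e ^_ i)%:R.
Proof.
elim: i => [|i IH]; first by rewrite /ff big_ord0 hornerC.
rewrite /ff big_ord_recr /= hornerM -/(ff i) IH hornerXsubC ffactnSr.
case: (leqP i e) => hie; first by rewrite natrM natrB.
by rewrite ffact_small // !mul0r.
Qed.

Lemma size_ff i : size (ff i) = i.+1.
Proof. by rewrite /ff size_prod_XsubC [index_enum _]unlock -enumT size_enum_ord. Qed.

Lemma det_ffact_neq0 n (e : 'I_n -> nat) : injective e ->
  \det (\matrix_(i < n, j < n) ((e j) ^_ i)%:R : 'M[K]_n) != 0.
Proof.
move=> inje.
pose L : 'M[K]_n := \matrix_(i, k) (ff i)`_k.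
pose V := Vandermonde n (\row_(j < n) ((e j)%:R : K)).
have -> : (\matrix_(i < n, j < n) ((e j) ^_ i)%:R : 'M[K]_n) = L *m V.
  apply/matrixP => i j; rewrite !mxE -ff_horner (@horner_coef_wide _ n).
    by apply: eq_bigr => k _; rewrite !mxE.
  by rewrite size_ff.
rewrite det_mulmx det_Vandermonde det_trig; last first.
  apply/is_trig_mxP => i k hik; rewrite mxE nth_default // size_ff.
  done.
rewrite mulf_eq0 negb_or; apply/andP; split.
  rewrite prodf_seq_neq0; apply/allP => i _ /=; rewrite mxE.
  have := lead_coef_prod_XsubC (index_enum 'I_i) xpredT (fun t : 'I_i => (t%:R : K)).
  by rewrite lead_coefE -/(ff i) size_ff /= => ->; rewrite oner_eq0.
rewrite prodf_seq_neq0; apply/allP => i _ /=.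
rewrite prodf_seq_neq0; apply/allP => j _ /=; apply/implyP => hij.
rewrite !mxE subr_eq0 natr_eqK; apply/negP => /eqP /inje hji.
by move: hij; rewrite hji ltnn.
Qed.



Lemma coef_XnD (p : {poly K}) i k :
  ('X^i * p^`(i))`_k = p`_k * ((k ^_ i)%:R).
Proof.
rewrite coefXnM; case: ltnP => hk.
  by rewrite ffact_small // mulr0.
by rewrite coef_derivn subnKC // mulr_natr.
Qed.

Lemma wr_distinct n (G : 'I_n -> {poly K}) : (forall k, G k != 0) ->
  injective (fun k => vx (G k)) -> wronskian G != 0.
Proof.
move=> G0 inj; set e := fun k => vx (G k).
set M := \matrix_(i < n, j < n) (G j)^`(i).
have hN : diag_mx (\row_(i < n) 'X^i) *m M =
   (\matrix_(i, j) drop_poly (e j) ('X^i * (G j)^`(i))) *m diag_mx (\row_j 'X^(e j)).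
  rewrite mul_diag_mx mul_mx_diag; apply/matrixP => i j; rewrite !mxE.
  rewrite [_ * 'X^(e j)]mulrC -low0_dec // => k hk; rewrite coef_XnD vx_lt ?mul0r //.
have := congr1 determinant hN; rewrite !det_mulmx !det_diag.
set H := \matrix_(i, j) drop_poly (e j) _.
have hH : \det H != 0.
  have : horner_eval 0 (\det H) != 0.
    rewrite -det_map_mx.
    have -> : map_mx (horner_eval 0) H =
       (\matrix_(i < n, j < n) ((e j) ^_ i)%:R) *m diag_mx (\row_j (G j)`_(e j)).
      rewrite mul_mx_diag; apply/matrixP => i j; rewrite !mxE horner_evalE.
      by rewrite horner_coef0 coef_drop_poly add0n coef_XnD mulrC.
    rewrite det_mulmx det_diag mulf_eq0 negb_or det_ffact_neq0 //=.
    rewrite prodf_seq_neq0; apply/allP => j _ /=; rewrite mxE; exact: vx_coef.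
  by apply: contra => /eqP ->; rewrite rmorph0.
move=> heq; apply/negP => /eqP hM.
move: heq; rewrite /wronskian -/M in hM; rewrite hM mulr0 => /esym/eqP.
rewrite mulf_eq0 (negbTE hH) /=; apply/negP; rewrite prodf_seq_neq0.
by apply/allP => j _ /=; rewrite mxE expf_neq0 // polyX_eq0.
Qed.


Lemma wr_comb n (f : 'I_n -> {poly K}) (C : 'M[K]_n) :
  wronskian (fun k => \sum_j C j k *: f j) = wronskian f * \det (map_mx polyC C).
Proof.
rewrite /wronskian -det_mulmx; congr determinant.
apply/matrixP => i k; rewrite !mxE (raddf_sum (@derivn K i)).
apply: eq_bigr => j _; rewrite !mxE; apply/polyP => t.
by rewrite coefMC !coef_derivn coefZ mulrnAl mulrC.
Qed.

Section Greedy.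
Variables (n : nat) (f : 'I_n -> {poly K}).
Hypothesis hind : lin_indep f.

Definition gC (C : nat -> 'I_n -> K) k := \sum_j C k j *: f j.

Lemma greedy m : (m <= n)%N -> exists C : nat -> 'I_n -> K,
  (forall k, (k < m)%N -> gC C k != 0) /\
  (forall k1 k2, (k1 < m)%N -> (k2 < m)%N -> vx (gC C k1) = vx (gC C k2) -> k1 = k2).
Proof.
elim: m => [_|m IH hm]; first by exists (fun _ _ => 0); split.
have [C [C0 Cinj]] := IH (ltnW hm).
pose B : 'M[K]_(n, m) := \matrix_(j, i) (f j)`_(vx (gC C i)).
have [c c0 cB] := @ker_exists n m B hm.
pose C' k := if k == m then (fun j => c 0 j) else C k.
have eqC k : (k < m)%N -> gC C' k = gC C k.
  by move=> hk; rewrite /gC /C' (ltn_eqF hk).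
have gm : gC C' m = \sum_j c 0 j *: f j by rewrite /gC /C' eqxx.
have gm0 : gC C' m != 0.
  apply/negP => /eqP h; move: c0; rewrite gm in h.
  have := hind h => hc; apply/negP; rewrite negbK; apply/eqP/matrixP => i j.
  by rewrite ord1 mxE hc.
have gmcoef k : (k < m)%N -> (gC C' m)`_(vx (gC C k)) = 0.
  move=> hk; rewrite gm coef_sum.
  have h : \sum_j c 0 j * B j (Ordinal hk) = 0.
    have := congr1 (fun M : 'M[K]_(1, m) => M 0 (Ordinal hk)) cB.
    rewrite /= [X in X = _ -> _]mxE => ->.
    by rewrite mxE.
  apply: eq_trans h; apply: eq_bigr => j _; rewrite coefZ mxE //.
have gmne k : (k < m)%N -> vx (gC C' m) <> vx (gC C k).
  move=> hk he; have := vx_coef gm0; by rewrite he gmcoef // eqxx.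
exists C'; split.
  move=> k; rewrite ltnS leq_eqVlt => /orP [/eqP ->|hk]; first exact: gm0.
  by rewrite eqC // C0.
move=> k1 k2 hk1 hk2.
have [e1|h1] : k1 = m \/ (k1 < m)%N.
  by move: hk1; rewrite ltnS leq_eqVlt => /orP [/eqP|]; auto.
all: have [e2|h2] : k2 = m \/ (k2 < m)%N by
  move: hk2; rewrite ltnS leq_eqVlt => /orP [/eqP|]; auto.
- by rewrite e1 e2.
- by rewrite e1 (eqC _ h2) => /(gmne _ h2).
- by rewrite e2 (eqC _ h1) => /esym /(gmne _ h1).
- by rewrite (eqC _ h1) (eqC _ h2); apply: Cinj.
Qed.

Lemma wr_neq0 : wronskian f != 0.
Proof.
have [C [C0 Cinj]] := greedy (leqnn n).
pose Cm : 'M[K]_n := \matrix_(j, k) C k j.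
have eG (k : 'I_n) : \sum_j Cm j k *: f j = gC C k.
  by apply: eq_bigr => j _; rewrite mxE.
have hG : wronskian (fun k : 'I_n => \sum_j Cm j k *: f j) != 0.
  apply: wr_distinct => [k|k1 k2 /= h].
    by rewrite eG; apply: C0.
  by apply: val_inj; apply: Cinj; rewrite ?ltn_ord // -(eG k1) -(eG k2).
move: hG; rewrite wr_comb; apply: contra => /eqP ->; by rewrite mul0r.
Qed.

End Greedy.

End Gen.
Section Spec.
Variables (K : fieldType) (u v : K).
Definition Yp : {poly K} := u *: 'X + v%:P.

Fixpoint tp (a b i : nat) : {poly K} :=
  if i is i'.+1 then
    Yp * tp a b i' *+ (a - i') + 'X * tp a b i' * u%:P *+ (b - i') + 'X * Yp * (tp a b i')^`()
  else 1.

Lemma size_Y : (size Yp <= 2)%N.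
Proof.
apply: leq_trans (size_polyD _ _) _; rewrite geq_max.
by rewrite (leq_trans (size_scale_leq _ _)) ?size_polyX // (leq_trans (size_polyC_leq1 _)).
Qed.

Lemma size_mulrn_le (p : {poly K}) n : (size (p *+ n) <= size p)%N.
Proof. by rewrite -scaler_nat size_scale_leq. Qed.

Lemma size_deriv_le (p : {poly K}) : (size p^`() <= (size p).-1)%N.
Proof.
case: (eqVneq p 0) => [->|p0]; first by rewrite deriv0 size_poly0.
by have := lt_size_deriv p0; lia.
Qed.

Lemma size_tp a b i : (size (tp a b i) <= i.+1)%N.
Proof.
elim: i => [|i IH] /=; first by rewrite size_poly1.
have hY := size_Y; have hX := size_polyX K; have hC := size_polyC_leq1 u.
apply: leq_trans (size_polyD _ _) _; rewrite geq_max; apply/andP; split.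
  apply: leq_trans (size_polyD _ _) _; rewrite geq_max; apply/andP; split.
    apply: leq_trans (size_mulrn_le _ _) _.
    apply: leq_trans (size_mul_leq _ _) _; lia.
  apply: leq_trans (size_mulrn_le _ _) _.
  apply: leq_trans (size_mul_leq _ _) _.
  have := size_mul_leq 'X (tp a b i); lia.
apply: leq_trans (size_mul_leq _ _) _.
have := size_mul_leq 'X Yp; have := size_deriv_le (tp a b i); lia.
Qed.

Lemma deriv_Y : Yp^`() = u%:P.
Proof. by rewrite /Yp derivD derivZ derivX derivC addr0 alg_polyC. Qed.

Lemma tp_spec a b i : (i <= a)%N -> (i <= b)%N ->
  ('X^a * Yp ^+ b)^`(i) = 'X^(a - i) * Yp ^+ (b - i) * tp a b i.
Proof.
elim: i => [|i IH] ha hb; first by rewrite derivn0 !subn0 mulr1.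
rewrite derivnS IH ?(ltnW ha) ?(ltnW hb) //= -(subnSK ha) -(subnSK hb).
set A := (a - i.+1)%N; set B := (b - i.+1)%N; set t := tp a b i.
rewrite !derivM derivXn deriv_exp deriv_Y /= !exprS.
ring.
Qed.

End Spec.

Lemma val_bound (K : fieldType) (Y W S : {poly K}) (L A B : nat) :
  Y.[0] != 0 -> W != 0 -> (size S <= L.+1)%N ->
  (Y * 'X) ^+ L * W = 'X^A * Y ^+ B * S -> (vx W <= A)%N.
Proof.
move=> Y0 W0 hS key.
have Yn0 : Y != 0 by apply: contraNneq Y0 => ->; rewrite horner0.
have S0 : S != 0.
  apply/negP => /eqP hS0; move: key; rewrite hS0 mulr0; apply/eqP.
  by rewrite mulf_neq0 // expf_neq0 // mulf_neq0 // polyX_eq0.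
have ht : (vx S <= L)%N by have := vx_size S0; lia.
have W10 := vx_coef W0; have S10 := vx_coef S0.
rewrite -vx_drop0 in W10; rewrite -vx_drop0 in S10.
rewrite (vx_dec W) (vx_dec S) in key.
move: key; set m := vx W; set t := vx S; set W1 := drop_poly m W; set S1 := drop_poly t S.
move=> key; rewrite leqNgt; apply/negP => hA.
set d := (L + m - (A + t))%N.
have hd : (0 < d)%N by rewrite /d; lia.
have e : 'X^(A + t) * ('X^d * (Y ^+ L * W1)) = 'X^(A + t) * (Y ^+ B * S1).
  have -> : 'X^(A + t) * ('X^d * (Y ^+ L * W1)) = 'X^(A + t + d) * (Y ^+ L * W1).
    by rewrite mulrA -exprD.
  rewrite /d subnKC; last by lia.
  have -> : 'X^(A + t) * (Y ^+ B * S1) = 'X^A * Y ^+ B * ('X^t * S1).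
    by rewrite exprD; ring.
  by rewrite -key exprD exprMn; ring.
have := mulfI _ e; rewrite expf_neq0 ?polyX_eq0 // => /(_ isT) e2.
have := congr1 (fun p => p.[0]) e2; rewrite /= !hornerM hornerXn expr0n.
rewrite (negbTE (lt0n_neq0 hd)) mul0r horner_exp => /esym /eqP.
by rewrite mulf_eq0 expf_eq0 (negbTE Y0) andbF /= horner_coef0 (negbTE S10).
Qed.

Lemma pval_le (K : fieldType) (W : {poly K}) : W != 0 -> (pval W <= vx W)%N.
Proof.
move=> W0; rewrite /pval; apply/bigmax_leqP => i; move: (nat_of_ord i) => k hi.
have := vx_coef W0; have e := divpK hi; set w := vx W; rewrite -e coefMXn.
by case: ltnP => [_|//]; rewrite eqxx.
Qed.

Theorem lemma2p5 (K : fieldType) (hchar : [pchar K] =i pred0)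
  (u v : K) (huv : u * v != 0) (l : nat) (alpha beta : 'I_l -> nat)
  (halpha : forall j, (l <= alpha j)%N) (hbeta : forall j, (l <= beta j)%N)
  (hind : lin_indep (fun j : 'I_l => 'X^(alpha j) * (u *: 'X + v%:P) ^+ beta j)) :
  let W := wronskian (fun j : 'I_l => 'X^(alpha j) * (u *: 'X + v%:P) ^+ beta j) in
  W != 0 /\ (pval W <= \sum_(j < l) alpha j)%N.
Proof.
move=> W.
have W0 : W != 0 := wr_neq0 hchar hind.
split => //.
apply: leq_trans (pval_le W0) _.
pose L := (\sum_(i < l) i)%N.
pose T : 'M[{poly K}]_l := \matrix_(i, j) tp u v (alpha j) (beta j) i.
have hM : diag_mx (\row_(i < l) (Yp u v * 'X) ^+ i) *m
    \matrix_(i < l, j < l) ('X^(alpha j) * (u *: 'X + v%:P) ^+ beta j)^`(i) =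
    T *m diag_mx (\row_j ('X^(alpha j) * Yp u v ^+ beta j)).
  rewrite mul_diag_mx mul_mx_diag; apply/matrixP => i j; rewrite !mxE.
  have hia : (i <= alpha j)%N := leq_trans (ltnW (ltn_ord i)) (halpha j).
  have hib : (i <= beta j)%N := leq_trans (ltnW (ltn_ord i)) (hbeta j).
  rewrite (tp_spec u v hia hib).
  have -> : 'X^(alpha j) = 'X^(alpha j - i) * 'X^i :> {poly K} by rewrite -exprD subnK.
  have -> : Yp u v ^+ beta j = Yp u v ^+ (beta j - i) * Yp u v ^+ i by rewrite -exprD subnK.
  rewrite exprMn; ring.
have := congr1 determinant hM; rewrite !det_mulmx !det_diag.
under eq_bigr do rewrite mxE.
under [X in _ = _ * X]eq_bigr do rewrite mxE.
rewrite prodrXr big_split /= !prodrXr -/W => key.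
apply: (@val_bound K (Yp u v) W (\det T) L).
- by rewrite /Yp hornerD hornerZ hornerX hornerC mulr0 add0r; move: huv; rewrite mulf_eq0 negb_or => /andP [].
- exact: W0.
- apply: size_det_le => i j; rewrite mxE; exact: size_tp.
- by rewrite key mulrC.
Qed.
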